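(* Consider the no-show model with homogeneous costs in the context. For $p\ge1$, $j\in[N]$, $\rho\ge0$, $\mathbf s\in\mathcal S$, let $\omega'_j(\rho,\mathbf s)=\sup_{\boldsymbol\xi\in\Xi}\{g(\mathbf s,\boldsymbol\xi)-\rho\|\boldsymbol\xi-\widehat{\boldsymbol\xi}^j\|_p^p\}$. Then $$\omega'_j(\rho,\mathbf s)=\sup_{\boldsymbol\lambda\in\Lambda,\ \mathbf y\in\mathcal Y(\boldsymbol\lambda)}\sum_{i=1}^nf_{ij}(\lambda_i,y_i),\qquad f_{ij}(\lambda_i,y_i):=\sup_{u^L_i\lambda_i\le\mu_i\le u^U_i\lambda_i}\{y_i(\mu_i-s_i)-\rho|\mu_i-\widehat\mu^j_i|^p-\rho|\lambda_i-\widehat\lambda^j_i|^p\}.$$ Moreover, without loss of optimality, $(\boldsymbol\lambda,\mathbf y)$ in this supremum may be restricted to satisfy: $y_n\in\{C,-d_0\}$; for each $i\in[n-1]$, $y_i=-d_0$ or $y_i=y_{i+1}+\lambda_{i+1}$; and $y_i\in\mathcal Y_i$ for all $i\in[n]$, where $\mathcal Y_i=\{-d_0+m:m=0,\dots,n-i\}\cup\{C+m:m=0,\dots,n-i\}$.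
   Context: Notation: $[m]=\{1,\dots,m\}$. $n,N\ge1$, $T>0$, $\mathcal S=\{\mathbf s\in\mathbb R^n:\mathbf s\ge0,\sum_is_i\le T\}$. Homogeneous costs: $c_1=\dots=c_n=1$ (waiting), $d_1=\dots=d_n=d_0\ge0$ (idleness), overtime $C\ge0$. Bounds $0\le u^L_i<u^U_i<\infty$; integer $K\in[n]$. $\Lambda=\{\boldsymbol\lambda\in\{0,1\}^n:\sum_i(1-\lambda_i)\le K\}$, $\Xi=\{(\boldsymbol\mu,\boldsymbol\lambda)\in\mathbb R^n\times\Lambda:u^L_i\lambda_i\le\mu_i\le u^U_i\lambda_i\ \forall i\}$; data $\widehat{\boldsymbol\xi}^j=(\widehat{\boldsymbol\mu}^j,\widehat{\boldsymbol\lambda}^j)\in\Xi$. For $\boldsymbol\xi=(\boldsymbol\mu,\boldsymbol\lambda)\in\Xi$, $g(\mathbf s,\boldsymbol\xi)$ is the optimal value of $\min_{\mathbf w\in\mathbb R^{n+1},\mathbf v\in\mathbb R^n}\sum_{i=1}^n(c_i\lambda_iw_i+d_iv_i)+Cw_{n+1}$ s.t. $w_i-v_{i-1}=\mu_{i-1}+w_{i-1}-s_{i-1}$ ($i=2,\dots,n+1$), $\mathbf w\ge0,w_1=0,\mathbf v\ge0$. For $\boldsymbol\lambda\in\Lambda$, $\mathcal Y(\boldsymbol\lambda)=\{\mathbf y\in\mathbb R^n:-y_i\le d_i\ \forall i;\ y_{i-1}-y_i\le c_i\lambda_i\ (i=2,\dots,n);\ y_n\le C\}$. $\|\cdot\|_p$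 is the $p$-norm on $\mathbb R^{2n}$. *)

(* Defs.v *)
From HB Require Import structures.
From mathcomp Require Import all_boot all_order all_algebra.
From mathcomp Require Import boolp classical_sets reals exp.
Set Implicit Arguments. Unset Strict Implicit. Unset Printing Implicit Defensive.
Import Order.TTheory GRing.Theory Num.Theory.
Local Open Scope ring_scope.
Local Open Scope classical_set_scope.

(* Indices: the paper's index i in [n] is the ordinal k : 'I_n with val k = i-1.
   For w in R^{n+1}, the paper's w_i is w (k : 'I_n.+1) with val k = i-1. *)

Section Defs.
Variable R : realType.

Definition pnorm (m : nat) (p : R) (x : 'I_m -> R) : R :=
  (\sum_(k < m) `|x k| `^ p) `^ p^-1.

Definition xi_vec (n : nat) (mu lam : 'I_n -> R) : 'I_(n + n) -> R :=
  fun k => match split k with inl i => mu i | inr i => lam i end.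

Definition in_Lambda (n K : nat) (lam : 'I_n -> R) : Prop :=
  (forall i, lam i = 0 \/ lam i = 1) /\ \sum_(i < n) (1 - lam i) <= K%:R.

Definition in_Xi (n K : nat) (uL uU : 'I_n -> R) (mu lam : 'I_n -> R) : Prop :=
  in_Lambda K lam /\ (forall i, uL i * lam i <= mu i <= uU i * lam i).

Definition in_S (n : nat) (T : R) (s : 'I_n -> R) : Prop :=
  (forall i, 0 <= s i) /\ \sum_(i < n) s i <= T.

Definition lp_feasible (n : nat) (s mu : 'I_n -> R)
    (w : 'I_n.+1 -> R) (v : 'I_n -> R) : Prop :=
  (forall k, 0 <= w k) /\ w ord0 = 0 /\ (forall k, 0 <= v k) /\
  (forall k : 'I_n, w (lift ord0 k) - v k = mu k + w (widen_ord (leqnSn n) k) - s k).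

(* objective with homogeneous costs c_i = 1, d_i = d0, overtime C *)
Definition lp_obj (n : nat) (d0 C : R) (lam : 'I_n -> R)
    (w : 'I_n.+1 -> R) (v : 'I_n -> R) : R :=
  \sum_(k < n) (1 * lam k * w (widen_ord (leqnSn n) k) + d0 * v k) + C * w ord_max.

Definition g (n : nat) (d0 C : R) (s mu lam : 'I_n -> R) : R :=
  inf [set z | exists w v, lp_feasible s mu w v /\ z = lp_obj d0 C lam w v].

Definition omega' (n K : nat) (d0 C p rho : R) (uL uU : 'I_n -> R)
    (muh lamh : 'I_n -> R) (s : 'I_n -> R) : R :=
  sup [set z | exists mu lam, in_Xi K uL uU mu lam /\
        z = g d0 C s mu lam
            - rho * (pnorm p (fun k => xi_vec mu lam k - xi_vec muh lamh k)) `^ p].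

Definition in_Y (n : nat) (d0 C : R) (lam y : 'I_n -> R) : Prop :=
  (forall i, - y i <= d0) /\
  (forall i i' : 'I_n, val i' = (val i).+1 -> y i - y i' <= 1 * lam i') /\
  (forall i : 'I_n, val i = n.-1 -> y i <= C).

Definition f_ij (p rho uLi uUi si muhi lamhi lami yi : R) : R :=
  sup [set z | exists mui, uLi * lami <= mui <= uUi * lami /\
        z = yi * (mui - si) - rho * `|mui - muhi| `^ p - rho * `|lami - lamhi| `^ p].

Definition restricted (n : nat) (d0 C : R) (lam y : 'I_n -> R) : Prop :=
  (forall i : 'I_n, val i = n.-1 -> y i = C \/ y i = - d0) /\
  (forall i i' : 'I_n, val i' = (val i).+1 -> y i = - d0 \/ y i = y i' + lam i') /\
  (forall i : 'I_n, exists m : nat, (m <= n - (val i).+1)%N /\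
        (y i = - d0 + m%:R \/ y i = C + m%:R)).

End Defs.

(* Main.v *)
From HB Require Import structures.
From mathcomp Require Import all_boot all_order all_algebra.
From mathcomp Require Import boolp classical_sets reals exp.
From mathcomp Require Import ring lra zify.
Require Import Defs.
Import Order.TTheory GRing.Theory Num.Theory.
Local Open Scope ring_scope.
Local Open Scope classical_set_scope.

Section Aux.
Variable R : realType.

Lemma telesc (n : nat) (d : R) (W V Y L : nat -> R) : W 0%N = 0 ->
  \sum_(k < n) (L k * W k + d * V k) - \sum_(k < n) Y k * (W k.+1 - V k - W k)
  = \sum_(k < n) ((d + Y k) * V k + (L k.+1 + Y k.+1 - Y k) * W k.+1)
    - (L n + Y n) * W n.
Proof.
move=> W0; elim: n => [|n IH]; first by rewrite !big_ord0 W0; ring.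
rewrite !big_ord_recr /=.
move: IH.
set a := \sum_(i < n) _; set b := \sum_(i < n) _; set c := \sum_(i < n) _.
move=> IH.
have -> : a + (L n * W n + d * V n) - (b + Y n * (W n.+1 - V n - W n)) =
   (a - b) + (L n * W n + d * V n) - Y n * (W n.+1 - V n - W n) by ring.
rewrite IH; ring.
Qed.

Lemma pnormp m p (x : 'I_m -> R) : 1 <= p ->
  pnorm p x `^ p = \sum_(k < m) `|x k| `^ p.
Proof.
move=> p1; rewrite /pnorm -powRrM mulVf ?powRr1 //.
  by apply: sumr_ge0 => k _; exact: powR_ge0.
by apply: lt0r_neq0; apply: lt_le_trans p1.
Qed.

Lemma xi_split n p rho (y s mu lam muh lamh : 'I_n -> R) : 1 <= p ->
  \sum_(i < n) (y i * (mu i - s i) - rho * `|mu i - muh i| `^ p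
                 - rho * `|lam i - lamh i| `^ p)
  = \sum_(i < n) y i * (mu i - s i)
    - rho * (pnorm p (fun k => xi_vec mu lam k - xi_vec muh lamh k)) `^ p.
Proof.
move=> p1; rewrite pnormp // big_split_ord /=.
have El : forall i : 'I_n, xi_vec mu lam (lshift n i) - xi_vec muh lamh (lshift n i)
   = mu i - muh i.
  by move=> i; rewrite /xi_vec -[lshift n i]/(unsplit (inl i)) unsplitK.
have Er : forall i : 'I_n, xi_vec mu lam (rshift n i) - xi_vec muh lamh (rshift n i)
   = lam i - lamh i.
  by move=> i; rewrite /xi_vec -[rshift n i]/(unsplit (inr i)) unsplitK.
under [X in _ = _ - rho * (X + _)]eq_bigr do rewrite El.
under [X in _ = _ - rho * (_ + X)]eq_bigr do rewrite Er.
rewrite !sumrB mulrDr !mulr_sumr; ring.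
Qed.


Lemma inordE n (i : 'I_n.+1) : inord (val i) = i.
Proof. exact: inord_val. Qed.

Section Greedy.
Variables (n : nat) (d0 C : R) (s mu lam : 'I_n.+1 -> R).
Hypothesis d0ge : 0 <= d0.
Hypothesis Cge : 0 <= C.
Hypothesis lam01 : forall i, lam i = 0 \/ lam i = 1.
Ltac slra := have := d0ge; have := Cge; lra.

Definition xs (k : nat) := mu (inord k) - s (inord k).
Fixpoint Wg (k : nat) : R :=
  match k with 0 => 0 | k'.+1 => Num.max 0 (xs k' + Wg k') end.
Definition Vg (k : nat) : R := Num.max 0 (- (xs k + Wg k)).
Definition Lx (k : nat) : R := if (k < n.+1)%N then lam (inord k) else 0.
Fixpoint Yr (t : nat) : R :=
  match t with
  | 0 => C
  | t'.+1 => if 0 < Wg (n.+1 - t') then Yr t' + Lx (n.+1 - t') else - d0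
  end.
Definition Yg (k : nat) := Yr (n.+1 - k).

Lemma Lx01 k : Lx k = 0 \/ Lx k = 1.
Proof. by rewrite /Lx; case: ifP => _; [apply: lam01 | left]. Qed.

Lemma Lx_ge0 k : 0 <= Lx k.
Proof. by case: (Lx01 k) => ->. Qed.

Lemma Yg_rec k : (k < n.+1)%N ->
  Yg k = if 0 < Wg k.+1 then Yg k.+1 + Lx k.+1 else - d0.
Proof.
move=> kn; rewrite /Yg -(subnSK kn) /= subKn //.
Qed.

Lemma Yg_last : Yg n.+1 = C.
Proof. by rewrite /Yg subnn. Qed.

Lemma Yr_ge t : - d0 <= Yr t.
Proof.
elim: t => [|t IH] /=; first slra.
case: ifP => _; last lra.
have := Lx_ge0 (n.+1 - t); lra.
Qed.

Lemma Yr_form t : exists m : nat, (m <= t.-1)%N /\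
  (Yr t = - d0 + m%:R \/ Yr t = C + m%:R).
Proof.
elim: t => [|t [m [mt IH]]] /=.
  by exists 0%N; split => //; right; rewrite addr0.
case: ifP => _; last by exists 0%N; split => //; left; rewrite addr0.
case: t mt IH => [|t] mt IH.
  rewrite ?subn0 /Lx ltnn addr0.
  by exists m; split.
case: (Lx01 (n.+1 - t.+1)) => ->.
  exists m; split; first by apply: leq_trans mt _.
  by rewrite addr0.
exists m.+1; split; first by [].
by rewrite -natr1; case: IH => ->; [left|right]; ring.
Qed.

Lemma Wg_ge k : 0 <= Wg k.
Proof. by case: k => [|k] /=; rewrite ?le_max ?lexx. Qed.

Lemma Vg_ge k : 0 <= Vg k.
Proof. by rewrite /Vg le_max lexx. Qed.

Definition wg : 'I_n.+2 -> R := fun k => Wg k.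
Definition vg : 'I_n.+1 -> R := fun k => Vg k.
Definition yg : 'I_n.+1 -> R := fun k => Yg k.

Lemma WV_step k : Wg k.+1 - Vg k - Wg k = xs k.
Proof.
rewrite /= /Vg; set a := xs k + Wg k.
have : Num.max 0 a - Num.max 0 (- a) = a.
  case: (lerP 0 a) => h.
    rewrite max_l; [ring | lra].
  rewrite max_r; [ring|lra].
rewrite /a; lra.
Qed.

Lemma greedy_feasible : lp_feasible s mu wg vg.
Proof.
split; first by move=> k; exact: Wg_ge.
split; first by [].
split; first by move=> k; exact: Vg_ge.
move=> k; rewrite /wg /vg lift0 /=.
have := WV_step k; rewrite /= /xs !inordE; lra.
Qed.

Lemma greedy_inY : in_Y d0 C lam yg.
Proof.
split; first by move=> i; rewrite /yg /Yg; have := Yr_ge (n.+1 - i); lra.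
split.
  move=> i i' Hi; rewrite /yg (Yg_rec _ (ltn_ord i)) -Hi.
  have -> : lam i' = Lx i'.+1.-1.
    by rewrite /= /Lx ltn_ord inordE.
  rewrite /=; case: ifP => _; first lra.
  have := Yr_ge (n.+1 - i'); have := Lx_ge0 i'; rewrite /Yg; lra.
move=> i Hi; rewrite /yg (Yg_rec _ (ltn_ord i)) Hi Yg_last /Lx ltnn.
case: ifP => _; slra.
Qed.

Lemma greedy_restricted : restricted d0 C lam yg.
Proof.
split.
  move=> i Hi; rewrite /yg (Yg_rec _ (ltn_ord i)) Hi Yg_last /Lx ltnn.
  by case: ifP => _; [left; rewrite addr0 | right].
split.
  move=> i i' Hi; rewrite /yg (Yg_rec _ (ltn_ord i)) -Hi.
  have -> : lam i' = Lx i'.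
    by rewrite /Lx ltn_ord inordE.
  by case: ifP => _; [right | left].
move=> i; rewrite /yg /Yg.
have [m [mt H]] := Yr_form (n.+1 - i).
exists m; split => //.
apply: leq_trans mt _.
have := ltn_ord i; rewrite -subn1 -subnDA addn1 //.
Qed.


Lemma greedy_obj : lp_obj d0 C lam wg vg = \sum_(i < n.+1) yg i * (mu i - s i).
Proof.
have T := telesc n.+1 d0 Wg Vg Yg Lx (erefl : Wg 0 = 0).
have L0 : Lx n.+1 = 0 by rewrite /Lx ltnn.
rewrite L0 Yg_last add0r in T.
have Z : \sum_(k < n.+1) ((d0 + Yg k) * Vg k + (Lx k.+1 + Yg k.+1 - Yg k) * Wg k.+1) = 0.
  apply: big1 => k _; rewrite (Yg_rec _ (ltn_ord k)).
  case: ifP => hW.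
    have hV : Vg k = 0.
      move: hW; rewrite /= /Vg => hW.
      apply/eqP; rewrite eq_le Vg_ge andbT.
      move: hW; case: (lerP 0 (xs k + Wg k)) => h; last by rewrite ltxx.
      move=> _; rewrite max_l //; lra.
    rewrite hV; ring.
  have hW0 : Wg k.+1 = 0.
    apply/eqP; rewrite eq_le Wg_ge andbT; rewrite lt_def in hW.
    move/negbT: hW; rewrite negb_and Wg_ge orbF negbK => /eqP ->; by [].
  rewrite hW0; ring.
rewrite Z in T.
have E1 : \sum_(k < n.+1) (1 * lam k * wg (widen_ord (leqnSn n.+1) k) + d0 * vg k)
   = \sum_(k < n.+1) (Lx k * Wg k + d0 * Vg k).
  apply: eq_bigr => k _; rewrite /Lx ltn_ord inordE mul1r; by [].
have E2 : \sum_(i < n.+1) yg i * (mu i - s i)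
   = \sum_(k < n.+1) Yg k * (Wg k.+1 - Vg k - Wg k).
  apply: eq_bigr => k _; rewrite WV_step /xs inordE; by [].
rewrite /lp_obj E1 E2 /=.
move: T; rewrite /wg /=; lra.
Qed.

Lemma weak_dual (w : 'I_n.+2 -> R) (v : 'I_n.+1 -> R) (y : 'I_n.+1 -> R) :
  lp_feasible s mu w v -> in_Y d0 C lam y ->
  \sum_(i < n.+1) y i * (mu i - s i) <= lp_obj d0 C lam w v.
Proof.
move=> [wge [w0 [vge Hc]]] [Y1 [Y2 Y3]].
pose W k := w (inord k); pose V k := v (inord k).
pose Y k := if (k < n.+1)%N then y (inord k) else C.
have W0 : W 0%N = 0 by rewrite /W -w0; congr w; apply: val_inj; rewrite /= inordK.
have T := telesc n.+1 d0 W V Y Lx W0.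
have L0 : Lx n.+1 = 0 by rewrite /Lx ltnn.
have YC : Y n.+1 = C by rewrite /Y ltnn.
rewrite L0 YC add0r in T.
have Z : 0 <= \sum_(k < n.+1) ((d0 + Y k) * V k + (Lx k.+1 + Y k.+1 - Y k) * W k.+1).
  apply: sumr_ge0 => k _.
  have Yk : Y k = y k by rewrite /Y ltn_ord inordE.
  have Vk : V k = v k by rewrite /V inordE.
  apply: addr_ge0.
    rewrite Yk Vk; apply: mulr_ge0; last exact: vge.
    have := Y1 k; lra.
  apply: mulr_ge0; last exact: wge.
  rewrite Yk.
  case: (ltnP k.+1 n.+1) => hk.
    have := Y2 k (inord k.+1) (inordK hk).
    rewrite /Lx /Y hk; lra.
  have kn : (k : nat) = n by have := ltn_ord k; lia.
  have := Y3 k kn.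
  have Lk : Lx k.+1 = 0 by rewrite /Lx kn ltnn.
  have Yk1 : Y k.+1 = C by rewrite /Y kn ltnn.
  rewrite Lk Yk1; lra.
have E1 : \sum_(k < n.+1) (1 * lam k * w (widen_ord (leqnSn n.+1) k) + d0 * v k)
   = \sum_(k < n.+1) (Lx k * W k + d0 * V k).
  apply: eq_bigr => k _; rewrite /Lx ltn_ord inordE mul1r /W /V inordE.
  congr (_ * w _ + _); apply: val_inj; rewrite /= inordK //; have := ltn_ord k; lia.
have E2 : \sum_(i < n.+1) y i * (mu i - s i)
   = \sum_(k < n.+1) Y k * (W k.+1 - V k - W k).
  apply: eq_bigr => k _; rewrite /Y ltn_ord inordE.
  have -> : W k.+1 = w (lift ord0 k).
    rewrite /W; congr w; apply: val_inj; rewrite /= inordK ?lift0 //; have := ltn_ord k; lia.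
  have -> : W k = w (widen_ord (leqnSn n.+1) k).
    rewrite /W; congr w; apply: val_inj; rewrite /= inordK //; have := ltn_ord k; lia.
  rewrite /V inordE Hc; congr (_ * _); ring.
have E3 : w ord_max = W n.+1.
  rewrite /W; congr w; apply: val_inj; rewrite /= inordK //.
rewrite /lp_obj E1 E2 E3.
move: T Z; lra.
Qed.

Lemma g_ge (y : 'I_n.+1 -> R) : in_Y d0 C lam y ->
  \sum_(i < n.+1) y i * (mu i - s i) <= g d0 C s mu lam.
Proof.
move=> Hy; rewrite /g; apply: lb_le_inf.
  by exists (lp_obj d0 C lam wg vg); exists wg, vg; split => //; exact: greedy_feasible.
by move=> z [w [v [F ->]]]; exact: weak_dual.
Qed.

Lemma g_le : g d0 C s mu lam <= \sum_(i < n.+1) yg i * (mu i - s i).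
Proof.
rewrite -greedy_obj /g; apply: ge_inf.
  exists (\sum_(i < n.+1) yg i * (mu i - s i)).
  by move=> z [w [v [F ->]]]; apply: weak_dual => //; exact: greedy_inY.
by exists wg, vg; split => //; exact: greedy_feasible.
Qed.

End Greedy.


Section F.
Variables (p rho uLi uUi si muhi lamhi lami yi : R).
Hypotheses (rho0 : 0 <= rho) (uL0 : 0 <= uLi) (uLU : uLi <= uUi)
  (lam01 : lami = 0 \/ lami = 1).

Definition hfun (mui : R) :=
  yi * (mui - si) - rho * `|mui - muhi| `^ p - rho * `|lami - lamhi| `^ p.

Lemma f_has_sup : has_sup [set z | exists mui, uLi * lami <= mui <= uUi * lami /\
        z = yi * (mui - si) - rho * `|mui - muhi| `^ p - rho * `|lami - lamhi| `^ p].
Proof.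
split.
  exists (hfun (uLi * lami)); exists (uLi * lami); split => //.
  by apply/andP; split => //; case: lam01 => ->; rewrite ?mulr0 ?mulr1.
exists (`|yi| * (uUi + `|si|)) => z [mui [/andP [h1 h2] ->]].
have hm0 : 0 <= mui.
  by apply: le_trans h1; case: lam01 => ->; rewrite ?mulr0 ?mulr1.
have hmU : mui <= uUi.
  apply: le_trans h2 _; case: lam01 => ->; rewrite ?mulr0 ?mulr1 //; have := uL0; have := uLU; lra.
have hA : 0 <= rho * `|mui - muhi| `^ p by apply: mulr_ge0 => //; exact: powR_ge0.
have hB : 0 <= rho * `|lami - lamhi| `^ p by apply: mulr_ge0 => //; exact: powR_ge0.
suff : yi * (mui - si) <= `|yi| * (uUi + `|si|) by lra.
apply: le_trans (ler_norm _) _; rewrite normrM.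
apply: ler_wpM2l; first exact: normr_ge0.
apply: le_trans (ler_normB _ _) _; rewrite (ger0_norm hm0); lra.
Qed.

Lemma f_ub mui : uLi * lami <= mui <= uUi * lami ->
  hfun mui <= f_ij p rho uLi uUi si muhi lamhi lami yi.
Proof.
move=> hm; apply: (sup_upper_bound f_has_sup); exists mui; split => //.
Qed.

Lemma f_adh eps : 0 < eps -> exists mui, uLi * lami <= mui <= uUi * lami /\
  f_ij p rho uLi uUi si muhi lamhi lami yi - eps < hfun mui.
Proof.
move=> e0; have [z [mui [hm ->]] hz] := sup_adherent e0 f_has_sup.
by exists mui; split.
Qed.

End F.

End Aux.

Theorem proposition4 (R : realType) (n N K : nat) (T d0 C : R)
    (uL uU : 'I_n -> R) (muh lamh : 'I_N -> 'I_n -> R)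
    (p rho : R) (j : 'I_N) (s : 'I_n -> R) :
  (0 < n)%N -> (0 < N)%N -> 0 < T -> 0 <= d0 -> 0 <= C ->
  (forall i, 0 <= uL i /\ uL i < uU i) ->
  (1 <= K <= n)%N ->
  (forall j', in_Xi K uL uU (muh j') (lamh j')) ->
  1 <= p -> 0 <= rho -> in_S T s ->
  omega' K d0 C p rho uL uU (muh j) (lamh j) s
    = sup [set z | exists lam y, in_Lambda K lam /\ in_Y d0 C lam y /\
             z = \sum_(i < n) f_ij p rho (uL i) (uU i) (s i) (muh j i) (lamh j i) (lam i) (y i)]
  /\
  omega' K d0 C p rho uL uU (muh j) (lamh j) s
    = sup [set z | exists lam y, in_Lambda K lam /\ in_Y d0 C lam y /\
             restricted d0 C lam y /\
             z = \sum_(i < n) f_ij p rho (uL i) (uU i) (s i) (muh j i) (lamh j i) (lam i) (y i)].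
Proof.
move=> n0 _ _ d0ge Cge uLU HK _ p1 rho0 [s0 _].
case: n n0 uL uU muh lamh s uLU HK s0 => [//|n] _ uL uU muh lamh s uLU HK s0.
rewrite /omega'.
set A := [set z | exists mu lam, _ /\ _].
set B := [set z | exists lam y, in_Lambda K lam /\ in_Y d0 C lam y /\ _].
set Br := [set z | exists lam y, in_Lambda K lam /\ in_Y d0 C lam y /\ restricted d0 C lam y /\ _].
pose PN (mu lam : 'I_n.+1 -> R) :=
  rho * (pnorm p (fun k => xi_vec mu lam k - xi_vec (muh j) (lamh j) k)) `^ p.
have PN0 mu lam : 0 <= PN mu lam by apply: mulr_ge0 => //; exact: powR_ge0.
have uL0 i : 0 <= uL i by case: (uLU i).
have uLUi i : uL i <= uU i by case: (uLU i) => _ /ltW.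
have Ane : A !=set0.
  exists (g d0 C s uL (fun _ => 1) - PN uL (fun _ => 1)).
  exists uL, (fun _ => 1); split => //.
  split.
    split; first by move=> i; right.
    rewrite big1 ?ler0n // => i _; by rewrite subrr.
  by move=> i; rewrite !mulr1 lexx uLUi.
pose M := \sum_(i < n.+1) (d0 + C + n.+1%:R) * (uU i + s i).
have Aub : ubound A M.
  move=> a [mu [lam [[HL Hm] ->]]].
  have lam01 := HL.1.
  have := g_le _ _ _ _ s mu lam d0ge Cge lam01.
  have := PN0 mu lam; rewrite /PN.
  suff : \sum_(i < n.+1) yg _ _ d0 C s mu lam i * (mu i - s i) <= M by lra.
  apply: ler_sum => i _.
  have [_ [_ Hr]] := greedy_restricted _ _ d0 C s mu lam lam01.
  have [m [hm Hy]] := Hr i.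
  have hmn : (m%:R : R) <= n.+1%:R.
    rewrite ler_nat; apply: leq_trans hm _; rewrite leq_subr //.
  have hm0 : (0 : R) <= m%:R by rewrite ler0n.
  set Y := yg _ _ d0 C s mu lam i.
  have hY1 : - d0 <= Y by rewrite /Y; case: Hy => H; lra.
  have hY2 : Y <= d0 + C + n.+1%:R by rewrite /Y; case: Hy => H; lra.
  have hmu0 : 0 <= mu i.
    by case/andP: (Hm i) => h _; apply: le_trans h; case: (lam01 i) => ->; rewrite ?mulr0 ?mulr1.
  have hmuU : mu i <= uU i.
    case/andP: (Hm i) => _ h; apply: le_trans h _; case: (lam01 i) => ->;
      rewrite ?mulr0 ?mulr1 //; have := uL0 i; have := uLUi i; lra.
  have hs := s0 i.
  set X := mu i - s i.
  have h1 : 0 <= (d0 + C + n.+1%:R - Y) * (uU i + s i + X) by apply: mulr_ge0; rewrite /X; lra.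
  have h2 : 0 <= (d0 + C + n.+1%:R + Y) * (uU i + s i - X) by apply: mulr_ge0; rewrite /X; lra.
  nra.
have Asup : has_sup A by split => //; exists M.
pose SA := sup A.
have SAub : ubound A SA by exact: sup_upper_bound.
have BleSA : ubound B SA.
  move=> b [lam [y [HL [Hy ->]]]].
  have lam01 := HL.1.
  apply/ler_addgt0Pr => e e0.
  pose eps := e / n.+1%:R.
  have eps0 : 0 < eps by rewrite /eps divr_gt0 // ltr0Sn.
  have := fun i => f_adh _ p rho (uL i) (uU i) (s i) (muh j i) (lamh j i) (lam i) (y i) rho0 (uL0 i) (uLUi i) (lam01 i) eps eps0.
  move=> /choice [mu Hmu].
  have Xi : in_Xi K uL uU mu lam by split => // i; case: (Hmu i).
  have Aa := SAub _ (ex_intro _ mu (ex_intro _ lam (conj Xi erefl))).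
  have Hg := g_ge _ _ _ _ s mu lam d0ge Cge y Hy.
  have Hs := xi_split _ _ p rho y s mu lam (muh j) (lamh j) p1.
  have Hle : \sum_(i < n.+1) (f_ij p rho (uL i) (uU i) (s i) (muh j i) (lamh j i) (lam i) (y i) - eps)
     <= \sum_(i < n.+1) hfun _ p rho (s i) (muh j i) (lamh j i) (lam i) (y i) (mu i).
    by apply: ler_sum => i _; apply: ltW; case: (Hmu i).
  rewrite sumrB sumr_const card_ord in Hle.
  have Ee : eps *+ n.+1 = e by rewrite -mulr_natr /eps divfK // pnatr_eq0.
  rewrite Ee in Hle.
  rewrite /hfun in Hle; rewrite Hs in Hle.
  move: Aa; rewrite -/(PN mu lam) in Hle *; lra.
have AleBr : forall a, A a -> exists b, Br b /\ a <= b.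
  move=> a [mu [lam [[HL Hm] ->]]].
  have lam01 := HL.1.
  set y := yg _ _ d0 C s mu lam.
  exists (\sum_(i < n.+1) f_ij p rho (uL i) (uU i) (s i) (muh j i) (lamh j i) (lam i) (y i)).
  split.
    exists lam, y; split => //; split; first exact: greedy_inY.
    by split => //; exact: greedy_restricted.
  have := g_le _ _ _ _ s mu lam d0ge Cge lam01; rewrite -/y => Hg.
  have Hs := xi_split _ _ p rho y s mu lam (muh j) (lamh j) p1.
  have Hle : \sum_(i < n.+1) hfun _ p rho (s i) (muh j i) (lamh j i) (lam i) (y i) (mu i)
     <= \sum_(i < n.+1) f_ij p rho (uL i) (uU i) (s i) (muh j i) (lamh j i) (lam i) (y i).
    by apply: ler_sum => i _; apply: f_ub => //; exact: Hm.
  rewrite /hfun Hs in Hle; lra.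
have BrB : Br `<=` B.
  by move=> b [lam [y [HL [Hy [_ ->]]]]]; exists lam, y.
have Brne : Br !=set0.
  by case: Ane => a /AleBr [b [Hb _]]; exists b.
have Bne : B !=set0 by case: Brne => b /BrB Hb; exists b.
have Bsup : has_sup B by split => //; exists SA.
have Brsup : has_sup Br by split => //; exists SA => b /BrB; exact: BleSA.
have h1 : sup B <= SA by apply: ge_sup.
have h2 : sup Br <= sup B.
  by apply: ge_sup => // b /BrB; exact: sup_upper_bound.
have h3 : SA <= sup Br.
  apply: ge_sup => // a /AleBr [b [Hb hab]].
  by apply: le_trans hab _; exact: sup_upper_bound.
rewrite -/SA; split; apply/eqP; rewrite eq_le; apply/andP; split; lra.
Qed.
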